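(* If $r\ge 2$, then the glued binary tree $GT(r)$ satisfies ${\rm gp}_{\rm t}(GT(r))={\rm gp}_{\rm d}(GT(r))=0$.
   Context: A perfect binary tree of depth $r\ge1$ is a rooted tree in which every non-leaf vertex has exactly $2$ children and all leaves have depth $r$. The glued binary tree $GT(r)$ is obtained from two copies of the perfect binary tree of depth $r$ by pairwise identifying their leaves (via a fixed isomorphism of the copies). For $S\subseteq V(G)$, two vertices $u,v$ are $S$-positionable if every shortest $u,v$-path $P$ satisfies $V(P)\cap S\subseteq\{u,v\}$. $S$ is a general position set if every two vertices of $S$ are $S$-positionable; $S$ is a dual general position set if it is a general position set and every two vertices of $V(G)\setminus S$ are $S$-positionable; $S$ is a total general position set if every two vertices of $G$ are $S$-positionable. ${\rm gp}_{\rm d}(G)$ and ${\rm gp}_{\rm t}(G)$ are the maximum sizes of a dual, respectively total, general position set of $G$. *)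

(* Defs.v *)
From mathcomp Require Import all_boot.
From Stdlib Require Import ClassicalEpsilon.

Set Implicit Arguments.
Unset Strict Implicit.
Unset Printing Implicit Defensive.

Definition asb (P : Prop) : bool :=
  if excluded_middle_informative P then true else false.

Section GeneralPosition.
Variables (T : finType) (e : rel T).

(* [u :: p] is a shortest u,v-path: a walk from u to v of minimum length
   (a walk of minimum length is automatically a path). *)
Definition shortest_path (u v : T) (p : seq T) : Prop :=
  [/\ path e u p, last u p = v &
      forall q : seq T, path e u q -> last u q = v -> size p <= size q].

Definition positionable (S : {set T}) (u v : T) : Prop :=
  forall p : seq T, shortest_path u v p ->
  forall x : T, x \in u :: p -> x \in S -> x = u \/ x = v.

Definition gp_set (S : {set T}) : Prop :=
  forall u v, u \in S -> v \in S -> positionable S u v.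

Definition dual_gp_set (S : {set T}) : Prop :=
  gp_set S /\ (forall u v, u \notin S -> v \notin S -> positionable S u v).

Definition total_gp_set (S : {set T}) : Prop :=
  forall u v, positionable S u v.

Definition gpd : nat := \max_(S : {set T} | asb (dual_gp_set S)) #|S|.
Definition gpt : nat := \max_(S : {set T} | asb (total_gp_set S)) #|S|.

End GeneralPosition.

(* A perfect binary tree of depth r is encoded
   in heap order: vertices 1 .. 2^(r+1)-1, the children of i are 2i and 2i+1,
   the leaves are 2^r .. 2^(r+1)-1.  A vertex of GT(r) is a pair (i, b) where
   b : bool indicates the copy; leaves (shared by both copies) are only
   represented with b = false. *)
Definition GTV (r : nat) :=
  {x : 'I_(2 ^ r.+1) * bool | (0 < x.1) && (x.2 ==> (x.1 < 2 ^ r))}.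

Definition GTadj (r : nat) : rel (GTV r) :=
  fun x y =>
    let i := (val x).1 in let j := (val y).1 in
    let b := (val x).2 in let c := (val y).2 in
    ((j./2 == i) || (i./2 == j)) &&
    [|| b == c, 2 ^ r <= i | 2 ^ r <= j].

(* Main.v *)
Require Import Defs.
From mathcomp Require Import all_boot.
From mathcomp Require Import zify.
From Stdlib Require Import ClassicalEpsilon.
Set Implicit Arguments.
Unset Strict Implicit.

Lemma asbP (P : Prop) : asb P -> P.
Proof. by rewrite /asb; case: excluded_middle_informative. Qed.

Lemma sp2 (T : finType) (e : rel T) a x b :
  e a x -> e x b -> a != b -> ~~ e a b -> shortest_path e a b [:: x; b].
Proof.
move=> hax hxb nab nadj; split => //=; first by rewrite hax hxb.
case=> [|y [|z q]] //=.
- by move=> _ E; rewrite -E eqxx in nab.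
- by move=> /andP[hy _] E; rewrite -E hy in nadj.
Qed.

Lemma mid (T : finType) (e : rel T) (S : {set T}) a x b :
  positionable e S a b -> e a x -> e x b -> a != b -> ~~ e a b ->
  x \in S -> x = a \/ x = b.
Proof.
move=> P hax hxb nab nadj xS.
apply: (P _ (sp2 hax hxb nab nadj) x _ xS); by rewrite !inE eqxx !orbT.
Qed.

Definition idx r (x : GTV r) : nat := nat_of_ord (val x).1.
Definition cp r (x : GTV r) : bool := (val x).2.

Lemma adjE r (x y : GTV r) : GTadj x y =
  (((idx y)./2 == idx x) || ((idx x)./2 == idx y)) &&
  [|| cp x == cp y, 2 ^ r <= idx x | 2 ^ r <= idx y].
Proof. by []. Qed.

Lemma idx_gt0 r (x : GTV r) : 0 < idx x.
Proof. by case: x => [[i b] h]; rewrite /idx /=; case/andP: h. Qed.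

Lemma idx_lt r (x : GTV r) : idx x < 2 * 2 ^ r.
Proof. by rewrite -expnS; case: x => [[i b] h]; rewrite /idx /=. Qed.

Lemma cp_leaf r (x : GTV r) : cp x -> idx x < 2 ^ r.
Proof. by case: x => [[i b] h]; rewrite /idx /cp /= => hb; case/andP: h; rewrite hb. Qed.

Lemma exV r i b : 0 < i -> i < 2 * 2 ^ r -> (b ==> (i < 2 ^ r)) ->
  exists x : GTV r, idx x = i /\ cp x = b.
Proof.
rewrite -expnS => h0 h1 h2.
have P : (0 < (Ordinal h1, b).1) && ((Ordinal h1, b).2 ==> ((Ordinal h1, b).1 < 2 ^ r)).
  by rewrite /= h0 h2.
by exists (exist (fun x : 'I_(2 ^ r.+1) * bool => (0 < x.1) && (x.2 ==> (x.1 < 2 ^ r))) _ P).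
Qed.

Lemma neqV r (x y : GTV r) : idx x <> idx y \/ cp x <> cp y -> x != y.
Proof. by move=> H; apply/eqP => E; rewrite E in H; case: H. Qed.

Lemma irr r (a : GTV r) : GTadj a a = false.
Proof. have := idx_gt0 a; rewrite adjE -!divn2 => h; apply/negbTE; lia. Qed.

Lemma split_dual r (S : {set GTV r}) (D : dual_gp_set (@GTadj r) S) x a b :
  GTadj a x -> GTadj x b -> a != b -> ~~ GTadj a b -> x \in S ->
  (a \in S) != (b \in S).
Proof.
case: D => G C hax hxb nab nadj xS; apply/negP => /eqP E.
have P : positionable (@GTadj r) S a b.
  by case Ha: (a \in S); [apply: G; rewrite -?E | apply: C; rewrite -?E Ha].
by case: (mid P hax hxb nab nadj xS) => E'; subst; rewrite irr in hax hxb.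
Qed.

Lemma no_total r (S : {set GTV r}) (D : total_gp_set (@GTadj r) S) x a b :
  GTadj a x -> GTadj x b -> a != b -> ~~ GTadj a b -> x \notin S.
Proof.
move=> hax hxb nab nadj; apply/negP => xS.
by case: (mid (D a b) hax hxb nab nadj xS) => E'; subst; rewrite irr in hax hxb.
Qed.

Lemma r_ge r : 2 <= r -> 4 <= 2 ^ r.
Proof. by move=> h; rewrite (leq_trans _ (leq_pexp2l _ h)). Qed.

Lemma inner r (hr : 2 <= r) (x : GTV r) : 2 <= idx x < 2 ^ r ->
  exists p c1 c2 : GTV r,
  [/\ GTadj p x, GTadj x c1, GTadj x c2, GTadj c1 x & GTadj x p] /\
  [/\ p != c1, p != c2 & c1 != c2] /\ [/\ ~~ GTadj p c1, ~~ GTadj p c2 & ~~ GTadj c1 c2].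
Proof.
move=> /andP[h1 h2]; have h4 := r_ge hr.
set i := idx x; set b := cp x.
have [p [Pi Pc]] : exists p : GTV r, idx p = i./2 /\ cp p = b.
  apply: exV; rewrite -?divn2; [lia|lia|by apply/implyP => _; lia].
have [c1 [C1i C1c]] : exists p : GTV r, idx p = 2 * i /\ cp p = b && (2 * i < 2 ^ r).
  by apply: exV; [lia | lia | apply/implyP => /andP[]].
have [c2 [C2i C2c]] : exists p : GTV r, idx p = (2 * i).+1 /\ cp p = b && ((2 * i).+1 < 2 ^ r).
  by apply: exV; [lia | lia | apply/implyP => /andP[]].
exists p, c1, c2; split; [split|split; split].
all: rewrite ?adjE -/i -/b ?Pi ?Pc ?C1i ?C1c ?C2i ?C2c.
all: try (apply: neqV; left; rewrite ?Pi ?C1i ?C2i -?divn2; lia).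
all: rewrite -!divn2; clear Pc C1c C2c; case: b; case: (ltnP (2*i) (2^r)); case: (ltnP (2*i).+1 (2^r)) => *; lia.
Qed.

Lemma outer r (hr : 2 <= r) (x : GTV r) : ~~ (2 <= idx x < 2 ^ r) ->
  exists a c : GTV r,
  [/\ GTadj a x, GTadj x c, a != c & ~~ GTadj a c] /\
  (2 <= idx a < 2 ^ r) /\ (2 <= idx c < 2 ^ r).
Proof.
move=> hx; have h4 := r_ge hr; have h0 := idx_gt0 x; have hl := idx_lt x.
have hc := @cp_leaf r x.
set i := idx x in hx h0 hl hc *; set b := cp x in hc *.
case: (ltnP i 2) => hi.
- have i1 : i = 1 by lia.
  have [a [Ai Ac]] : exists p : GTV r, idx p = 2 /\ cp p = b.
    by apply: exV; [lia|lia|apply/implyP => _; lia].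
  have [c [Ci Cc]] : exists p : GTV r, idx p = 3 /\ cp p = b.
    by apply: exV; [lia|lia|apply/implyP => _; lia].
  exists a, c; split; [split|split].
  all: rewrite ?adjE -/i -/b ?Ai ?Ac ?Ci ?Cc ?i1 ?eqxx ?andbT /=; try lia.
  by apply: neqV; left; rewrite Ai Ci.
- have bf : b = false by case: b hc => // /(_ isT); lia.
  have [a [Ai Ac]] : exists p : GTV r, idx p = i./2 /\ cp p = false.
    by apply: exV; rewrite -?divn2; lia.
  have [c [Ci Cc]] : exists p : GTV r, idx p = i./2 /\ cp p = true.
    by apply: exV; rewrite -?divn2 /=; lia.
  exists a, c; split; [split|split].
  all: rewrite ?adjE -/i -/b ?Ai ?Ac ?Ci ?Cc ?bf ?eqxx ?andbT /= -?divn2; try lia.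
  by apply: neqV; right; rewrite Ac Cc.
Qed.

Theorem mainTheorem10 (r : nat) (hr : 2 <= r) :
  gpt (@GTadj r) = 0 /\ gpd (@GTadj r) = 0.
Proof.
split.
- apply: big1 => S /asbP D; apply/eqP; rewrite cards_eq0; apply/eqP/setP => x.
  rewrite inE; apply/negbTE.
  case: (boolP (2 <= idx x < 2 ^ r)) => hx.
  + have [p [c1 [c2 [[h1 h2 _ _ _] [[n1 _ _] [a1 _ _]]]]]] := inner hr hx.
    exact: (no_total D h1 h2 n1 a1).
  + have [a [c [[h1 h2 n1 a1] _]]] := outer hr hx.
    exact: (no_total D h1 h2 n1 a1).
- apply: big1 => S /asbP D; apply/eqP; rewrite cards_eq0; apply/eqP/setP => x.
  rewrite inE; apply/negbTE.
  have inn : forall y : GTV r, 2 <= idx y < 2 ^ r -> y \notin S.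
    move=> y hy; have [p [c1 [c2 [[h1 h2 h3 h4 h5] [[n1 n2 n3] [a1 a2 a3]]]]]] := inner hr hy.
    apply/negP => yS.
    have := split_dual D h1 h2 n1 a1 yS.
    have := split_dual D h1 h3 n2 a2 yS.
    have := split_dual D h4 h3 n3 a3 yS.
    by case: (p \in S); case: (c1 \in S); case: (c2 \in S).
  case: (boolP (2 <= idx x < 2 ^ r)) => hx; first exact: inn.
  have [a [c [[h1 h2 n1 a1] [ha hc]]]] := outer hr hx.
  apply/negP => xS; have := split_dual D h1 h2 n1 a1 xS.
  by rewrite (negbTE (inn _ ha)) (negbTE (inn _ hc)).
Qed.
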